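(* Let $\kappa>0$ be an ordinal. For each $\alpha<\kappa$, let $L_\alpha$ be a set equipped with two partial orders $\le$ and $\preceq$, each of which makes $L_\alpha$ a complete lattice. Let $L=\prod_{\alpha<\kappa}L_\alpha$ with the pointwise order $x\le y$ iff $x(\alpha)\le y(\alpha)$ for all $\alpha<\kappa$. For $\alpha<\kappa$ define $x\sqsubseteq_\alpha y$ iff $x(\beta)=y(\beta)$ for all $\beta<\alpha$ and $x(\alpha)\preceq y(\alpha)$. Then $(L,\le,(\sqsubseteq_\alpha)_{\alpha<\kappa})$ satisfies Axiom 3 if and only if for every $\alpha<\kappa$ and all $a,b\in L_\alpha$, $a\preceq b$ implies $a\le b$. (In that case the structure is a model of Axioms 1–4, since Axioms 1, 2 and 4 always hold for this construction.)
   Context: Conventions. $x=_\alpha y$ means $x\sqsubseteq_\alpha y$ and $y\sqsubseteq_\alpha x$. For $x\in L$, $(x]_\alpha=\{y\in L:\forall\beta<\alpha,\ x=_\beta y\}$. For a set $X$, $X\sqsubseteq_\alpha y$ means $x\sqsubseteq_\alpha y$ for all $x\in X$. Axiom 3: for every $x\in L$, every $\alpha<\kappa$ and every $X\subseteq(x]_\alpha$ there is $y\in(x]_\alpha$ with $X\sqsubseteq_\alpha y$ such that for all $z\in(x]_\alpha$ with $X\sqsubseteq_\alpha z$ we have $y\sqsubseteq_\alpha z$ and $y\le z$. The other axioms: - (A1) for all $\alpha<\beta<\kappa$, $x\sqsubseteq_\beta y$ implies $x=_\alpha y$; - (A2) $\bigcap_{\alpha<\kappa}=_\alpha$ is the identity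 relation on $L$; - (A4) for every nonempty $X\subseteq L$, every $\alpha<\kappa$ and every $y\in L$, if $y=_\alpha x$ for all $x\in X$ then $y=_\alpha\bigvee X$, where $\bigvee$ is the join for $\le$. *)

(* Defs.v *)
From Stdlib Require Import Classical FunctionalExtensionality.

(* A strict well-order on an index type I: stands for the ordinal kappa,
   with [lt] the ordinal order on the elements alpha < kappa. *)
Definition is_wellorder (I : Type) (lt : I -> I -> Prop) : Prop :=
  (forall a, ~ lt a a) /\
  (forall a b c, lt a b -> lt b c -> lt a c) /\
  (forall a b, lt a b \/ a = b \/ lt b a) /\
  well_founded lt.

Definition is_lub {T : Type} (le : T -> T -> Prop) (S : T -> Prop) (s : T) : Prop :=
  (forall x, S x -> le x s) /\ (forall u, (forall x, S x -> le x u) -> le s u).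

Definition complete_lattice_order {T : Type} (le : T -> T -> Prop) : Prop :=
  (forall x, le x x) /\
  (forall x y z, le x y -> le y z -> le x z) /\
  (forall x y, le x y -> le y x -> x = y) /\
  (forall S : T -> Prop, exists s, is_lub le S s).

Section Product.
Context {I : Type} (lt : I -> I -> Prop) (L : I -> Type)
        (le prec : forall a, L a -> L a -> Prop).

Definition prodT := forall a : I, L a.

Definition leL (x y : prodT) : Prop := forall a, le a (x a) (y a).

Definition sqle (a : I) (x y : prodT) : Prop :=
  (forall b, lt b a -> x b = y b) /\ prec a (x a) (y a).

Definition sqeq (a : I) (x y : prodT) : Prop := sqle a x y /\ sqle a y x.

Definition down (x : prodT) (a : I) : prodT -> Prop :=
  fun y => forall b, lt b a -> sqeq b x y.

Definition Axiom1 : Prop :=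
  forall a b x y, lt a b -> sqle b x y -> sqeq a x y.

Definition Axiom2 : Prop :=
  forall x y, (forall a, sqeq a x y) <-> x = y.

Definition Axiom3 : Prop :=
  forall (x : prodT) (a : I) (X : prodT -> Prop),
    (forall z, X z -> down x a z) ->
    exists y, down x a y /\ (forall z, X z -> sqle a z y) /\
      (forall z, down x a z -> (forall w, X w -> sqle a w z) ->
                 sqle a y z /\ leL y z).

(* Axiom 4, with the join of X in (L, <=) taken as any least upper bound of X
   (which is unique by antisymmetry). *)
Definition Axiom4 : Prop :=
  forall (X : prodT -> Prop) (a : I) (y j : prodT),
    (exists x, X x) -> is_lub leL X j ->
    (forall x, X x -> sqeq a y x) -> sqeq a y j.

End Product.

(* Main.v *)
Require Import Defs.
From Stdlib Require Import Classical ClassicalEpsilon FunctionalExtensionality ProofIrrelevance.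

Definition upd {I : Type} {L : I -> Type} (f : forall d, L d) (a : I) (u : L a) :
  forall d, L d :=
  fun d => match excluded_middle_informative (a = d) with
           | left e => eq_rect a L u d e
           | right _ => f d end.

Lemma upd_eq {I : Type} {L : I -> Type} (f : forall d, L d) (a : I) (u : L a) :
  upd f a u a = u.
Proof.
  unfold upd. destruct (excluded_middle_informative (a = a)) as [e|n].
  - rewrite (proof_irrelevance _ e eq_refl). reflexivity.
  - congruence.
Qed.

Lemma upd_neq {I : Type} {L : I -> Type} (f : forall d, L d) (a d : I) (u : L a) :
  a <> d -> upd f a u d = f d.
Proof.
  intro H. unfold upd. destruct (excluded_middle_informative (a = d)); congruence.
Qed.

Definition pick {T : Type} {P : T -> Prop} (H : exists x, P x) : T :=
  proj1_sig (constructive_indefinite_description P H).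
Lemma pick_spec {T : Type} {P : T -> Prop} (H : exists x, P x) : P (pick H).
Proof. unfold pick. exact (proj2_sig _). Qed.

Theorem mainTheorem14
  (I : Type) (lt : I -> I -> Prop) (Hwo : is_wellorder I lt) (Hne : inhabited I)
  (L : I -> Type) (le prec : forall a, L a -> L a -> Prop)
  (Hle : forall a, complete_lattice_order (le a))
  (Hprec : forall a, complete_lattice_order (prec a)) :
  (Axiom1 lt L prec /\ Axiom2 lt L prec /\ Axiom4 lt L le prec) /\
  (Axiom3 lt L le prec <->
     (forall (a : I) (u v : L a), prec a u v -> le a u v)).
Proof.
  destruct Hwo as [Hirr [Htr [Htri Hwf]]].
  assert (lerefl : forall a x, le a x x) by (intros a; apply (Hle a)).
  assert (leanti : forall a x y, le a x y -> le a y x -> x = y) by (intros a; apply (Hle a)).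
  assert (prrefl : forall a x, prec a x x) by (intros a; apply (Hprec a)).
  assert (pranti : forall a x y, prec a x y -> prec a y x -> x = y) by (intros a; apply (Hprec a)).
  split; [split; [|split]|].
  -
    intros a b x y Hab [H1 H2]. unfold sqeq, sqle.
    assert (E : x a = y a) by (apply H1; exact Hab).
    split; split.
    + intros c Hc; apply H1; eauto.
    + rewrite E; apply prrefl.
    + intros c Hc; symmetry; apply H1; eauto.
    + rewrite E; apply prrefl.
  -
    intros x y; split.
    + intros H. apply functional_extensionality_dep. intro a.
      destruct (H a) as [[_ A] [_ B]]. apply pranti; auto.
    + intros <- a. unfold sqeq, sqle. split; split; auto.
  -
    intros X a y j [x0 Hx0] [Hub Hleast] HX.
    assert (Hagree : forall x c, X x -> (lt c a \/ c = a) -> y c = x c).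
    { intros x c Hx [Hc|Hc].
      - destruct (HX x Hx) as [[H1 _] _]. apply H1; exact Hc.
      - subst c. destruct (HX x Hx) as [[_ A] [_ B]]. apply pranti; auto. }
    set (u := fun d => match excluded_middle_informative (lt d a \/ d = a) with
                       | left _ => y d | right _ => j d end).
    assert (Hu : leL L le j u).
    { apply Hleast. intros x Hx d. unfold u.
      destruct (excluded_middle_informative (lt d a \/ d = a)) as [h|h].
      - rewrite (Hagree x d Hx h). apply lerefl.
      - apply Hub; exact Hx. }
    assert (Hj : forall c, (lt c a \/ c = a) -> y c = j c).
    { intros c Hc. apply leanti.
      - rewrite (Hagree x0 c Hx0 Hc). apply Hub; exact Hx0.
      - specialize (Hu c). unfold u in Hu.
        destruct (excluded_middle_informative (lt c a \/ c = a)); [exact Hu|contradiction]. }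
    unfold sqeq, sqle. rewrite (Hj a (or_intror eq_refl)).
    split; split; auto.
    all: intros b Hb; try symmetry; apply Hj; auto.
  - split.
    +
      intros A3 a u v Huv.
      set (base := fun d => pick (proj2 (proj2 (proj2 (Hle d))) (fun _ => False))).
      set (w := upd base a u).
      set (z := upd base a v).
      destruct (A3 w a (fun t => t = w)) as [y [Hy [HXy Hmin]]].
      { intros t -> b Hb. unfold sqeq, sqle. split; split; auto. }
      assert (Hdz : down lt L prec w a z).
      { intros b Hb. unfold sqeq, sqle, w, z.
        assert (forall c, lt c b -> upd base a u c = upd base a v c).
        { intros c Hc. rewrite !upd_neq; auto; intro e; rewrite <- e in Hc; exact (Hirr a (Htr _ _ _ Hc Hb)). }
        assert (upd base a u b = upd base a v b) by (rewrite !upd_neq; auto; intro e; rewrite <- e in Hb; exact (Hirr a Hb)).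
        split; split; auto; try (rewrite H0; auto); intros; symmetry; auto. }
      assert (HwX : forall t, t = w -> sqle lt L prec a t z).
      { intros t ->. unfold sqle, w, z. split.
        - intros c Hc. rewrite !upd_neq; auto; intro e; rewrite <- e in Hc; exact (Hirr a Hc).
        - rewrite !upd_eq. exact Huv. }
      assert (Hdw : down lt L prec w a w).
      { intros b Hb. unfold sqeq, sqle. split; split; auto. }
      assert (HwX' : forall t, t = w -> sqle lt L prec a t w).
      { intros t ->. unfold sqle. split; auto. }
      destruct (Hmin w Hdw HwX') as [[_ P1] L1].
      destruct (HXy w eq_refl) as [_ P2].
      assert (E : y a = u).
      { unfold w in P1, P2; rewrite upd_eq in P1, P2. apply pranti; auto. }
      destruct (Hmin z Hdz HwX) as [_ L2].
      specialize (L2 a). unfold z in L2. rewrite upd_eq, E in L2. exact L2.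
    +
      intros Hc x a X HX.
      set (bot := fun d => pick (proj2 (proj2 (proj2 (Hle d))) (fun _ => False))).
      set (s := fun d => pick (proj2 (proj2 (proj2 (Hprec d))) (fun t => exists z, X z /\ z d = t))).
      set (y := fun d => match excluded_middle_informative (lt d a) with
                         | left _ => x d
                         | right _ => match excluded_middle_informative (lt a d) with
                                      | left _ => bot d | right _ => s d end end).
      assert (Ylt : forall d, lt d a -> y d = x d).
      { intros d Hd. unfold y. destruct (excluded_middle_informative (lt d a)); [auto|contradiction]. }
      assert (Ygt : forall d, lt a d -> y d = bot d).
      { intros d Hd. unfold y. destruct (excluded_middle_informative (lt d a)).
        - exfalso; eapply Hirr; eauto.
        - destruct (excluded_middle_informative (lt a d)); [auto|contradiction]. }
      assert (Yeq : y a = s a).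
      { unfold y. destruct (excluded_middle_informative (lt a a)).
        - exfalso; eapply Hirr; eauto.
        - destruct (excluded_middle_informative (lt a a)); [exfalso; eapply Hirr; eauto|auto]. }
      assert (Hs := pick_spec (proj2 (proj2 (proj2 (Hprec a))) (fun t => exists z, X z /\ z a = t))).
      fold (s a) in Hs. destruct Hs as [Hsub Hsleast].
      assert (Hdown : forall z, down lt L prec x a z -> forall c, lt c a -> z c = x c).
      { intros z Hz c Hcl.
        destruct (Hz c Hcl) as [[_ A] [_ B]]. symmetry. apply pranti; auto. }
      assert (Hdown' : forall z, (forall c, lt c a -> z c = x c) -> down lt L prec x a z).
      { intros z Hz b Hb. unfold sqeq, sqle.
        assert (forall c, lt c b -> x c = z c) by (intros; symmetry; apply Hz; eauto).
        rewrite (Hz b Hb). split; split; auto. intros; symmetry; auto. }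
      exists y. split; [|split].
      * apply Hdown'. exact Ylt.
      * intros z Hz. split.
        -- intros b Hb. rewrite Ylt by auto; apply Hdown; auto.
        -- rewrite Yeq. apply Hsub. eauto.
      * intros z Hz Hzu. split.
        -- split.
           ++ intros b Hb. rewrite Ylt by auto; symmetry; apply Hdown; auto.
           ++ rewrite Yeq. apply Hsleast. intros t [w [Hw <-]]. apply Hzu; auto.
        -- intro d. destruct (Htri d a) as [h|[h|h]].
           ++ rewrite Ylt, (Hdown z Hz d h); auto.
           ++ subst d. apply Hc. rewrite Yeq. apply Hsleast. intros t [w [Hw <-]]. apply Hzu; auto.
           ++ rewrite Ygt; auto.
              pose proof (pick_spec (proj2 (proj2 (proj2 (Hle d))) (fun _ => False))) as [_ B].
              apply B. intros _ [].
Qed.
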